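(* $m(\aleph_0,\aleph_0,\aleph_0)$ equals the least size of a nonmeager set of reals, and for every infinite regular cardinal $\theta$, $m(\theta,\theta,\theta,\theta)=\mathfrak b_\theta$.
   Context: For a set $\Delta$, cardinal $\lambda$, infinite regular $\theta\le|\Delta|$ and $\chi$ equal to $2$ or an infinite cardinal, $m(\Delta,\lambda,\theta,\chi)$ is the least size of a family $\mathcal H$ of functions from $\Delta$ to $[\lambda]^{<\chi}$ such that for every $X\in[\Delta]^\theta$ and every $g:X\to\lambda$ there is $h\in\mathcal H$ with $|\{\xi\in X\mid g(\xi)\in h(\xi)\}|=\theta$; $m(\Delta,\lambda,\theta)$ means $m(\Delta,\lambda,\theta,2)$. $\mathfrak b_\theta$ is the least size of a family in ${}^\theta\theta$ unbounded with respect to $<^*$, where $f<^*g$ iff $\{\xi<\theta\mid f(\xi)\ge g(\xi)\}$ is bounded in $\theta$. *)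

(* Defs.v *)
From HB Require Import structures.
From mathcomp Require Import all_boot all_order all_algebra.
From mathcomp Require Import all_classical all_reals all_analysis.
Set Implicit Arguments. Unset Strict Implicit. Unset Printing Implicit Defensive.
Import numFieldNormedType.Exports.
Local Open Scope classical_set_scope.
Local Open Scope card_scope.

(* A cardinal is represented by a type (its underlying set); |A| <= |B| is
   [A #<= B] (existence of an injection), from mathcomp-classical. *)

(* Generic covering property underlying m(Delta, lambda, theta, chi):
   - [Th] is a type of cardinality theta (so |X| = theta for X ⊆ Delta,
     Delta of size theta, means [set: Th] #<= X),
   - [Ch] is a type of cardinality chi (so h(xi) ∈ [lambda]^{<chi} means
     ~ ([set: Ch] #<= h xi)). *)
Definition m_family (D L Th Ch : Type) (H : set (D -> set L)) : Prop :=
  (forall h, H h -> forall xi, ~ ([set: Ch] #<= h xi)) /\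
  (forall X : set D, [set: Th] #<= X ->
     forall g : D -> L, exists2 h, H h &
       [set: Th] #<= [set xi | X xi /\ h xi (g xi)]).

(* Well-order / infinite regular cardinal, given as a well-ordered type (T, lt)
   whose order type is an infinite regular initial ordinal. *)
Definition strict_well_order (T : Type) (lt : T -> T -> Prop) : Prop :=
  well_founded lt /\ (forall x, ~ lt x x) /\
  (forall x y z, lt x y -> lt y z -> lt x z) /\
  (forall x y, lt x y \/ x = y \/ lt y x).

Definition bounded_in (T : Type) (lt : T -> T -> Prop) (A : set T) : Prop :=
  exists b, forall a, A a -> lt a b.

Definition infinite_regular_cardinal (T : Type) (lt : T -> T -> Prop) : Prop :=
  strict_well_order lt /\
  (forall x, ~ ([set: T] #<= [set y | lt y x])) /\
  infinite_set [set: T] /\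
  (forall A : set T, ~ ([set: T] #<= A) -> bounded_in lt A).

Definition lt_star (T : Type) (lt : T -> T -> Prop) (f g : T -> T) : Prop :=
  bounded_in lt [set xi | ~ lt (f xi) (g xi)].

Definition star_unbounded (T : Type) (lt : T -> T -> Prop) (B : set (T -> T)) : Prop :=
  ~ (exists g : T -> T, forall f, B f -> lt_star lt f g).

Definition nowhere_dense (X : topologicalType) (A : set X) : Prop :=
  interior (closure A) = set0.

Definition meager (X : topologicalType) (A : set X) : Prop :=
  exists F : nat -> set X, (forall n, nowhere_dense (F n)) /\
    A `<=` \bigcup_n F n.

(* Main.v *)
Require Import Defs.
From mathcomp Require Import all_boot all_order all_algebra.
From mathcomp Require Import all_classical all_reals all_analysis.
From mathcomp Require Import lra zify.
Set Implicit Arguments. Unset Strict Implicit. Unset Printing Implicit Defensive.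
Import Order.TTheory GRing.Theory Num.Theory.
Import numFieldNormedType.Exports.
Local Open Scope classical_set_scope.
Local Open Scope card_scope.
Lemma card_le_inj T U (A : set T) (B : set U) (f : T -> U) :
  (forall x, A x -> B (f x)) -> {in A &, injective f} -> A #<= B.
Proof.
move=> fAB finj; have /injfunPex: exists2 f : T -> U, set_fun A B f & set_inj A f.
  by exists f.
by case=> phi; apply: inj_card_le.
Qed.

Lemma card_le_get T U (A : set T) (B : set U) : A #<= B -> forall u0 : U,
  exists f : T -> U, (forall x, A x -> B (f x)) /\ (forall x y, A x -> A y -> f x = f y -> x = y).
Proof.
move=> /card_leP[phi] u0.
pose f x := match pselect (A x) with left ax => val (phi (exist _ x (mem_set ax))) | right _ => u0 end.
exists f; split.
  move=> x ax; rewrite /f; case: pselect => // ax'.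
  by apply: set_mem; apply: valP.
move=> x y ax ay; rewrite /f; case: pselect => // ax'; case: pselect => // ay'.
move=> /val_inj /(@inj _ _ _ phi) h.
have := h (in_setT _) (in_setT _).
by case.
Qed.

Lemma unbounded_card (S : set nat) :
  (forall N, exists n, (N <= n)%N /\ S n) -> [set: nat] #<= S.
Proof.
move=> /choice[sel Hsel].
pose f := fix f k := if k is k'.+1 then sel (f k').+1 else sel 0%N.
have fS k : S (f k) by case: k => [|k] /=; [exact: (Hsel 0%N).2 | exact: (Hsel _).2].
have fI k : (f k < f k.+1)%N by exact: (Hsel _).1.
have hm := homo_ltn ltn_trans fI.
apply: (card_le_inj (f := f)) => // x y _ _ E.
by case: (ltngtP x y) => // /hm; rewrite E ltnn.
Qed.

Lemma card_unbounded (S : set nat) :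
  [set: nat] #<= S -> forall N, exists n, (N <= n)%N /\ S n.
Proof.
move=> HS N; apply: contrapT => nS.
have : finite_set S.
  apply: (sub_finite_set (B := `I_N)); last exact: finite_II.
  move=> n Sn; rewrite /= ltnNge; apply/negP => Nn; apply: nS; by exists n.
by move/(card_le_finite HS); apply: infinite_nat.
Qed.

Fixpoint Nv (d : nat -> bool) (L : nat) : nat :=
  if L is L'.+1 then 2 * Nv d L' + d L' else 0.

Lemma Nv_lt d L : Nv d L < 2 ^ L.
Proof. elim: L => [|L IH] //=; rewrite expnS; case: (d L) => /=; lia. Qed.

Lemma Nv_ext d d' L : (forall i, i < L -> d i = d' i) -> Nv d L = Nv d' L.
Proof.
elim: L => [|L IH] //= h; rewrite IH ?h // => i iL; apply: h; lia.
Qed.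

Lemma Nv_agree d d' a j : Nv d a = Nv d' a ->
  (forall i, a <= i < a + j -> d i = d' i) -> Nv d (a + j) = Nv d' (a + j).
Proof.
move=> h0; elim: j => [|j IH] h; first by rewrite addn0.
rewrite addnS /= IH ?h //; first lia.
move=> i /andP[h1 h2]; apply: h; lia.
Qed.

Lemma Nv_low d L j : Nv d L * 2 ^ j <= Nv d (L + j).
Proof.
elim: j => [|j IH]; first by rewrite expn0 muln1 addn0.
rewrite addnS /= expnS; nia.
Qed.

Lemma Nv_up d L j : Nv d (L + j) < (Nv d L).+1 * 2 ^ j.
Proof.
elim: j => [|j IH]; first by rewrite expn0 muln1 addn0.
rewrite addnS /= expnS; case: (d (L + j)) => /=; nia.
Qed.

Lemma Nv_bound d L L' : Nv d L' * 2 ^ L <= (Nv d L).+1 * 2 ^ L'.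
Proof.
case: (leqP L L') => h.
  have := Nv_up d L (L' - L); rewrite subnKC // => h1.
  have -> : 2 ^ L' = 2 ^ (L' - L) * 2 ^ L by rewrite -expnD subnK.
  by rewrite mulnA; apply: leq_mul; [exact: ltnW | exact: leqnn].
have := Nv_low d L' (L - L'); rewrite subnKC; last exact: ltnW.
move=> h1.
have -> : 2 ^ L = 2 ^ (L - L') * 2 ^ L' by rewrite -expnD subnK // ltnW.
rewrite mulnA; apply: leq_mul; [exact: (leq_trans h1) | exact: leqnn].
Qed.

Lemma Nv_extend d L j K : Nv d L * 2 ^ j <= K < (Nv d L).+1 * 2 ^ j ->
  exists d', (forall i, i < L -> d' i = d i) /\ Nv d' (L + j) = K.
Proof.
elim: j K => [|j IH] K.
  rewrite expn0 !muln1 addn0 => h; exists d; split => //; lia.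
rewrite expnS => /andP[h1 h2].
have [d'' [hd'' hN]] : exists d'', (forall i, i < L -> d'' i = d i) /\ Nv d'' (L + j) = K./2.
  apply: IH; apply/andP; split.
    rewrite -(leq_double) -!muln2 ; have := odd_double_half K; lia.
  rewrite -ltn_double -!muln2; have := odd_double_half K; lia.
exists (fun i => if i == L + j then odd K else d'' i); split.
  move=> i iL; have -> : (i == L + j) = false by apply/eqP; lia.
  exact: hd''.
rewrite addnS /= eqxx.
rewrite (@Nv_ext _ d'' (L + j)); last first.
  by move=> i ij; have -> : (i == L + j) = false by apply/eqP; lia.
rewrite hN; have := odd_double_half K; rewrite -muln2; lia.
Qed.

Fixpoint bcode (x : nat -> bool) (L : nat) : nat :=
  if L is L'.+1 then bcode x L' + x L' * 2 ^ L' else 0.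

Lemma bcode_lt x L : bcode x L < 2 ^ L.
Proof. elim: L => [|L IH] //=; rewrite expnS; case: (x L) => /=; lia. Qed.

Lemma bcode_bit x L i : i < L -> odd (bcode x L %/ 2 ^ i) = x i.
Proof.
elim: L => [|L IH] // iL /=.
case: (ltngtP i L) iL => [h _|h|-> _].
- rewrite divnDr; last by apply: dvdn_mull; apply: dvdn_exp2l; lia.
  rewrite oddD IH //.
  have -> : x L * 2 ^ L %/ 2 ^ i = x L * 2 ^ (L - i).
    rewrite -(subnK (ltnW h)) expnD mulnA mulnK ?expn_gt0 //.
    by rewrite subnK // ltnW.
  rewrite oddM oddX.
  have -> : (L - i == 0) = false by apply/eqP; lia.
  by rewrite andbF addbF.
- by rewrite ltnS leqNgt h.
rewrite addnC divnMDl ?expn_gt0 // divn_small ?bcode_lt // addn0.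
by case: (x L).
Qed.

Section Blocks.
Variable p : nat -> nat.
Hypothesis p0 : p 0 = 0.
Hypothesis pinc : forall j, p j < p j.+1.

Lemma p_mono : {homo p : j k / j < k}.
Proof. exact: homo_ltn ltn_trans pinc. Qed.

Lemma p_le j k : j <= k -> p j <= p k.
Proof. by rewrite leq_eqVlt => /orP[/eqP->//|/p_mono/ltnW]. Qed.

Lemma p_ge j : j <= p j.
Proof. elim: j => [|j IH] //; exact: leq_ltn_trans IH (pinc j). Qed.

Fixpoint blk (i : nat) : nat :=
  if i is i'.+1 then (if p (blk i').+1 <= i'.+1 then (blk i').+1 else blk i') else 0.

Lemma blk_spec i : p (blk i) <= i < p (blk i).+1.
Proof.
elim: i => [|i IH] /=; first by rewrite p0 leqnn (leq_trans _ (pinc 0)) // p0.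
case/andP: IH => h1 h2.
case: ifP => h.
  have e : p (blk i).+1 = i.+1 by apply/eqP; rewrite eqn_leq h h2.
  by rewrite e leqnn /= (leq_trans _ (pinc _)) // e.
by rewrite ltnNge h andbT (leq_trans h1).
Qed.

Lemma blk_uniq i j : p j <= i < p j.+1 -> blk i = j.
Proof.
move=> /andP[h1 h2]; have /andP[h3 h4] := blk_spec i.
case: (ltngtP (blk i) j) => // h.
  by have := p_le h; rewrite leqNgt (leq_ltn_trans h1 h4).
by have := p_le h; rewrite leqNgt (leq_ltn_trans h3 h2).
Qed.

End Blocks.

Fixpoint part (t : nat -> nat) (j : nat) : nat :=
  if j is j'.+1 then maxn (part t j').+1 (\max_(i < (part t j').+1) t i) else 0.

Lemma part_lt t j : part t j < part t j.+1.
Proof. by rewrite /= leq_maxl. Qed.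

Lemma part_big t j i : i <= part t j -> t i <= part t j.+1.
Proof.
move=> h; rewrite /= (leq_trans _ (leq_maxr _ _)) //.
by apply: (@leq_bigmax_cond _ (fun _ => true) (fun k : 'I_(part t j).+1 => t k) (Ordinal (h : i < (part t j).+1))).
Qed.

Section Theta.
Variables (T : Type) (lt : T -> T -> Prop).
Hypothesis Hreg : infinite_regular_cardinal lt.

Let small (A : set T) := ~ ([set: T] #<= A).

Let lt_irr x : ~ lt x x.
Proof. by case: Hreg => [[_ [? _]] _]. Qed.
Let lt_trans x y z : lt x y -> lt y z -> lt x z.
Proof. by case: Hreg => [[_ [_ [? _]]] _]; eauto. Qed.
Let lt_tri x y : lt x y \/ x = y \/ lt y x.
Proof. by case: Hreg => [[_ [_ [_ ?]]] _]. Qed.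
Let lt_asym x y : lt x y -> ~ lt y x.
Proof. by move=> h1 h2; exact: (lt_irr (lt_trans h1 h2)). Qed.

Let bounded_small A : bounded_in lt A -> small A.
Proof.
case=> b Hb HT; case: Hreg => [_ [Hinit _]]; apply: (Hinit b).
by apply: card_le_trans HT _; apply: subset_card_le => x /Hb.
Qed.

Let small_bounded A : small A -> bounded_in lt A.
Proof. by case: Hreg => [_ [_ [_ Hr]]]; apply: Hr. Qed.

Let no_max x : exists b, lt x b.
Proof.
have : small [set x].
  move=> HT; case: Hreg => [_ [_ [Hinf _]]]; apply: Hinf.
  by apply: card_le_finite HT (finite_set1 x).
by move=> /small_bounded[b Hb]; exists b; apply: Hb.
Qed.

Let small_image (f : T -> T) A : small A -> small (f @` A).
Proof. by move=> sA HT; apply: sA; apply: card_le_trans HT (card_image_le f A). Qed.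

Definition hf (f : T -> T) (xi : T) : set T :=
  [set y | exists z, (z = xi \/ lt z xi) /\ (y = f z \/ lt y (f z))].

Let hf_small f xi : small (hf f xi).
Proof.
have [b xb] := no_max xi.
have sZ : small [set z | z = xi \/ lt z xi].
  apply: bounded_small; exists b => z [->//|]; by move=> /lt_trans; apply.
have [c Hc] := small_bounded (small_image (f := f) sZ).
apply: bounded_small; exists c => y [z [Hz [->|Hy]]].
  by apply: Hc; exists z.
by apply: lt_trans Hy _; apply: Hc; exists z.
Qed.

Lemma theta_part1 (B : set (T -> T)) : star_unbounded lt B ->
  exists2 H : set (T -> set T), m_family T T H & H #<= B.
Proof.
move=> HB; exists (hf @` B); last exact: card_image_le.
split; first by move=> _ [f Bf <-] xi; apply: hf_small.
move=> X HX g; apply: contrapT => nh; apply: HB.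
have Xunb eta : exists x, X x /\ (x = eta \/ lt eta x).
  apply: contrapT => nx; apply: (bounded_small (A := X)) HX; exists eta => x Xx.
  have [//|[exe|lex]] := lt_tri x eta.
    by exfalso; apply: nx; exists x; split => //; left.
  by exfalso; apply: nx; exists x; split => //; right.
have [e He] := choice Xunb.
exists (fun eta => g (e eta)) => f Bf.
have sS : small [set xi | X xi /\ hf f xi (g xi)].
  by move=> HS; apply: nh; exists (hf f) => //; exists f.
have [beta Hbeta] := small_bounded sS.
exists beta => eta /= Hn; apply: contrapT => nlt.
have [Xe Hee] := He eta.
have Hbe : ~ lt (e eta) beta.
  move=> lteb; apply: nlt; case: Hee => [<-//|]; by move=> /lt_trans; apply.
apply: Hbe; apply: Hbeta; split => //.
exists eta; split; first by case: Hee => [->|]; [left|right].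
have [//|[E|E]] := lt_tri (f eta) (g (e eta)); first by left.
by right.
Qed.

Lemma theta_part2 (H : set (T -> set T)) : m_family T T H ->
  exists2 B : set (T -> T), star_unbounded lt B & B #<= H.
Proof.
case=> Hsmall Hcov.
have Hex h : exists Fh : T -> T, forall xi, H h -> forall y, h xi y -> lt y (Fh xi).
  suff /choice[Fh HFh] : forall xi, exists c, H h -> forall y, h xi y -> lt y c.
    by exists Fh.
  move=> xi.
  have [Hh|nHh] := pselect (H h); last by exists xi.
  have [c Hc] := small_bounded (Hsmall h Hh xi).
  by exists c => _; apply: Hc.
have [F HF] := choice Hex.
exists (F @` H); last exact: card_image_le.
move=> [G HG].
have [h Hh HS] := Hcov setT (card_lexx _) G.
have [beta Hbeta] := HG (F h) (ex_intro2 _ _ h Hh erefl).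
suff : bounded_in lt [set xi | setT xi /\ h xi (G xi)] by move/bounded_small; apply.
exists beta => xi [_ Hxi].
by apply: Hbeta => /=; apply: lt_asym; apply: HF.
Qed.

End Theta.
Section Part1a.
Variable R : realType.
Local Open Scope ring_scope.

Definition aa (k : nat) : R := 1 - (k.+1%:R)^-1.

Lemma aa_ge0 k : 0 <= aa k.
Proof. by rewrite /aa subr_ge0 invf_le1 // ler1n. Qed.

Lemma aa_lt1 k : aa k < 1.
Proof. by rewrite /aa ltrBlDr ltrDl invr_gt0 ltr0n. Qed.

Lemma aa_mono k k' : (k <= k')%N -> aa k <= aa k'.
Proof.
move=> kk; rewrite /aa.
by rewrite lerD2l lerN2 lef_pV2 ?posrE ?ltr0n // ler_nat.
Qed.

Lemma aa_lt k : aa k < aa k.+1.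
Proof.
rewrite /aa.
by rewrite ltrD2l ltrN2 ltf_pV2 ?posrE ?ltr0n // ltr_nat.
Qed.

Definition phi (r : R) (n : nat) : set nat :=
  [set k | exists m : int, m%:~R + aa k < r * n.+1%:R < m%:~R + aa k.+1].

Lemma int_eq_btw (m1 m2 : int) (t : R) :
  m1%:~R < t -> t < m1%:~R + 1 -> m2%:~R < t -> t < m2%:~R + 1 -> m1 = m2.
Proof.
move=> h1 h2 h3 h4.
have l12 : (m1 < m2 + 1)%R by rewrite -(ltr_int R) intrD; lra.
have l21 : (m2 < m1 + 1)%R by rewrite -(ltr_int R) intrD; lra.
apply/eqP; rewrite eq_le -!ltzD1; by rewrite l12 l21.
Qed.

Lemma phi_uniq r n k1 k2 : phi r n k1 -> phi r n k2 -> k1 = k2.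
Proof.
move=> [m1 /andP[h1 h1']] [m2 /andP[h2 h2']].
have := aa_ge0 k1; have := aa_ge0 k2; have := aa_lt1 k1.+1; have := aa_lt1 k2.+1 => *.
have E : m1 = m2 by apply: (int_eq_btw (t := r * n.+1%:R)); lra.
subst m2.
case: (ltngtP k1 k2) => // kk.
  have H := aa_mono kk; clear kk; exfalso; lra.
have H := aa_mono kk; clear kk; exfalso; lra.
Qed.

Lemma phi_small r n : ~ ([set: bool] #<= phi r n).
Proof.
move=> /card_le_get /(_ 0%N) [f [fS fI]].
have := phi_uniq (fS true I) (fS false I) => /fI.
by move=> /(_ I I).
Qed.

End Part1a.
Section Part1aMain.
Variable R : realType.
Local Open Scope ring_scope.

Lemma ball_R (x y e : R) : ball x e y <-> `|x - y| < e.
Proof. by rewrite -ball_normE /ball_ /=. Qed.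

Lemma part1a (A : set R) : ~ meager A ->
  exists2 H : set (nat -> set nat), m_family nat bool H & H #<= A.
Proof.
move=> nA; exists (@phi R @` A); last exact: card_image_le.
split; first by move=> _ [r _ <-] xi; apply: phi_small.
move=> X HX g.
apply: contrapT => nh; apply: nA.
have Xunb := card_unbounded HX.
exists (fun N => [set r | forall n, X n -> (N <= n)%N -> ~ phi r n (g n)]); split; last first.
  move=> r Ar; apply: contrapT => nr.
  apply: nh; exists (phi r); first by exists r.
  apply: unbounded_card => N.
  apply: contrapT => nN; apply: nr; exists N => //= n Xn Nn pn.
  by apply: nN; exists n.
move=> N; rewrite /nowhere_dense; apply/seteqP; split => // z /= /nbhs_ballP [e /= e0 He].
have [n [Nn Xn]] := Xunb (maxn N (Num.trunc (e^-1))).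
rewrite geq_max in Nn; case/andP: Nn => Nn ten.
pose c : R := n.+1%:R.
have c0 : 0 < c by rewrite ltr0n.
have ec : e^-1 < c.
  apply: (lt_le_trans (truncnS_gt _)); by rewrite ler_nat ltnS.
have ec' : 1 < e * c by move: ec; rewrite -(ltr_pM2l e0) mulfV // gt_eqF.
pose k := g n. pose m := Num.floor (z * c).
have hm1 := floor_le (z * c); have hm2 := floorD1_gt (z * c).
rewrite intrD in hm2.
have ak0 := aa_ge0 R k; have ak1 := aa_lt1 R k.+1; have akk := aa_lt R k.
pose r0 := (m%:~R + (aa R k + aa R k.+1) / 2) / c.
have r0c : r0 * c = m%:~R + (aa R k + aa R k.+1) / 2 by rewrite /r0 divfK // gt_eqF.
have Hr0 : closure [set r | forall n, X n -> (N <= n)%N -> ~ phi r n (g n)] r0.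
  apply: He; apply/ball_R.
  rewrite -(ltr_pM2r c0).
  have -> : `|z - r0| * c = `|z * c - r0 * c| by rewrite -[c in LHS]ger0_norm ?ltW // -normrM mulrBl.
  rewrite r0c; apply: (lt_trans _ ec'); rewrite ltr_norml; apply/andP; split; lra.
pose d := (aa R k.+1 - aa R k) / 2 / c.
have d0 : 0 < d by rewrite /d divr_gt0 // divr_gt0 // subr_gt0.
have dc : d * c = (aa R k.+1 - aa R k) / 2 by rewrite /d divfK // gt_eqF.
have [r [Fr /ball_R Br]] := Hr0 (ball r0 d) (nbhsx_ballx _ _ d0).
apply: (Fr n Xn Nn); exists m.
have : `|r0 * c - r * c| < d * c by rewrite -mulrBl normrM (ger0_norm (ltW c0)) ltr_pM2r.
rewrite r0c dc ltr_norml => /andP[h1 h2]; apply/andP; split; lra.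
Qed.

End Part1aMain.

Section Reals.
Variable R : realType.
Local Open Scope ring_scope.

Definition pw (L : nat) : R := (2 ^ L)%:R.

Lemma pw_gt0 L : 0 < pw L.
Proof. by rewrite /pw ltr0n expn_gt0. Qed.

Lemma pwD L j : pw (L + j) = pw L * pw j.
Proof. by rewrite /pw expnD natrM. Qed.

Definition rval (d : nat -> bool) : R :=
  sup [set (Nv d L)%:R / pw L | L in [set: nat]].

Lemma frac_le (a b L L' : nat) : (a * 2 ^ L' <= b * 2 ^ L)%N ->
  a%:R / pw L <= b%:R / pw L'.
Proof.
move=> h; rewrite ler_pdivrMr ?pw_gt0 // mulrAC ler_pdivlMr ?pw_gt0 //.
by rewrite /pw -!natrM ler_nat.
Qed.

Lemma val_ub d L : ubound [set (Nv d L')%:R / pw L' | L' in [set: nat]] ((Nv d L).+1%:R / pw L).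
Proof. by move=> _ [L' _ <-]; apply: frac_le; apply: Nv_bound. Qed.

Lemma val_low d L : (Nv d L)%:R <= rval d * pw L.
Proof.
rewrite -ler_pdivrMr ?pw_gt0 //; apply: sup_upper_bound.
  split; first by exists ((Nv d 0)%:R / pw 0), 0%N.
  by exists ((Nv d 0).+1%:R / pw 0); apply: val_ub.
by exists L.
Qed.

Lemma val_up d L : rval d * pw L <= (Nv d L).+1%:R.
Proof.
rewrite -ler_pdivlMr ?pw_gt0 //; apply: ge_sup; last exact: val_ub.
by exists ((Nv d 0)%:R / pw 0), 0%N.
Qed.

Lemma ball_R2 (x y e : R) : ball x e y <-> `|x - y| < e.
Proof. by rewrite -ball_normE /ball_ /=. Qed.

Lemma escape (G : set R) : nowhere_dense G -> forall L K, exists j K',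
  (K * 2 ^ j <= K' < K.+1 * 2 ^ j)%N /\
  forall y, K'%:R <= y * pw (L + j) <= K'.+1%:R -> ~ G y.
Proof.
move=> nG L K.
pose lo := K%:R / pw L; pose hi := K.+1%:R / pw L.
have lohi : lo < hi by rewrite /lo /hi ltr_pM2r ?invr_gt0 ?pw_gt0 // ltr_nat.
have lo0 : 0 <= lo by rewrite /lo divr_ge0 // ltW // pw_gt0.
have [z /andP[zlo zhi] nz] : exists2 z, lo < z < hi & ~ closure G z.
  apply: contrapT => nz.
  have : interior (closure G) ((lo + hi) / 2).
    apply/nbhs_ballP; exists ((hi - lo) / 2) => /=; first lra.
    move=> y /ball_R2 hy; apply: contrapT => ny; apply: nz; exists y => //.
    move: hy; rewrite ltr_norml => /andP[h1 h2]; apply/andP; split; lra.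
  by rewrite nG.
have [B [nB GB]] : exists B, nbhs z B /\ ~ (G `&` B !=set0).
  by apply: contrapT => nb; apply: nz => B nbB; apply: contrapT => h; apply: nb; exists B.
have [e /= e0 He] := (nbhs_ballP _ _).1 nB.
pose j := Num.trunc (e^-1).
have je : e^-1 < pw j.
  apply: (lt_le_trans (truncnS_gt _)); rewrite /pw ler_nat.
  exact: ltn_expl.
pose c := pw (L + j).
have c0 : 0 < c by apply: pw_gt0.
have ce : 1 < e * c.
  suff : e^-1 < c by rewrite -(ltr_pM2l e0) mulfV // gt_eqF.
  by apply: (lt_le_trans je); rewrite /c /pw ler_nat leq_pexp2l // leq_addl.
have z0 : 0 <= z * c by rewrite mulr_ge0 // ltW // (le_lt_trans lo0).
pose K' := Num.trunc (z * c).
have /andP[k1 k2] := truncn_itv z0.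
have loc : lo * c = (K * 2 ^ j)%:R.
  by rewrite /lo /c pwD mulrA divfK ?gt_eqF ?pw_gt0 // /pw natrM.
have hic : hi * c = (K.+1 * 2 ^ j)%:R.
  by rewrite /hi /c pwD mulrA divfK ?gt_eqF ?pw_gt0 // /pw natrM.
have zc1 : lo * c < z * c by rewrite ltr_pM2r.
have zc2 : z * c < hi * c by rewrite ltr_pM2r.
exists j; exists K'; split.
  apply/andP; split.
    rewrite -ltnS -(ltr_nat R); rewrite loc in zc1.
    apply: (lt_le_trans zc1); rewrite -/K' in k2; exact: ltW.
  rewrite -(ltr_nat R); rewrite hic in zc2; exact: (le_lt_trans k1).
move=> y /andP[y1 y2] Gy; apply: GB; exists y; split => //; apply: He; apply/ball_R2.
rewrite -(ltr_pM2r c0) -[c in X in X < _]ger0_norm ?ltW // -normrM mulrBl.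
apply: (le_lt_trans _ ce); rewrite ler_norml; apply/andP; split.
  rewrite -/K' in k1 k2 *; move: y2 k1; rewrite -/c; lra.
rewrite -/K' in k1 k2 *; move: y1 k2; rewrite -/c; lra.
Qed.

Section NF.
Variable F : nat -> set R.
Hypothesis HF : forall k, nowhere_dense (F k).

Definition extd (a' : nat) (x' : nat -> bool) (a'' : nat) (x'' : nat -> bool) :=
  (a' <= a'')%N /\ forall i, (i < a')%N -> x'' i = x' i.

Definition Req (a K k : nat) (a' : nat) (x' : nat -> bool) :=
  forall d, Nv d a = K -> (forall i, (a <= i < a')%N -> d i = x' i) -> ~ F k (rval d).

Lemma Req_up a K k a' x' a'' x'' : Req a K k a' x' -> extd a' x' a'' x'' -> Req a K k a'' x''.
Proof.
move=> hR [h1 h2] d hd hag; apply: (hR d hd) => i /andP[i1 i2].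
rewrite -h2 //; apply: hag; rewrite i1 /=; exact: leq_trans i2 h1.
Qed.

Lemma Req_achieve a K k a' x' : (a <= a')%N ->
  exists a'' x'', extd a' x' a'' x'' /\ Req a K k a'' x''.
Proof.
move=> aa'.
have [Kbig|Ksmall] := leqP (2 ^ a) K.
  exists a', x'; split; first by split.
  move=> d hd; have := Nv_lt d a; rewrite hd ltnNge Kbig //.
have [d0' [_ hd0']] : exists d0', (forall i, (i < 0)%N -> d0' i = false) /\ Nv d0' (0 + a) = K.
  by apply: Nv_extend => /=; rewrite mul1n Ksmall.
pose d0 i := if (i < a)%N then d0' i else x' i.
have hd0 : Nv d0 a = K by rewrite -hd0' add0n; apply: Nv_ext => i ia; rewrite /d0 ia.
have [j [K' [/andP[b1 b2] esc]]] := escape (HF k) a' (Nv d0 a').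
have [d1 [hd1 hN1]] := Nv_extend (introT andP (conj b1 b2)).
exists (a' + j)%N, (fun i => if (i < a')%N then x' i else d1 i); split.
  by split; [exact: leq_addr | move=> i ->].
move=> d hd hag.
have eq1 : Nv d1 a = Nv d0 a.
  apply: Nv_ext => i ia; apply: hd1; exact: leq_trans ia aa'.
have Nd : Nv d (a' + j) = K'.
  rewrite -hN1 -(subnKC (leq_trans aa' (leq_addr j a'))).
  apply: Nv_agree; first by rewrite eq1 hd hd0.
  move=> i /andP[i1 i2]; rewrite subnKC in i2; last exact: leq_trans aa' (leq_addr j a').
  rewrite hag ?i1 ?i2 //.
  case: ifP => // ia'; rewrite hd1 // /d0; have -> : (i < a)%N = false by rewrite ltnNge i1.
  by [].
apply: esc; rewrite -Nd; apply/andP; split; [exact: val_low | exact: val_up].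
Qed.

Lemma iterate_req a (reqs : nat -> nat -> (nat -> bool) -> Prop) T :
  (forall t a' x' a'' x'', reqs t a' x' -> extd a' x' a'' x'' -> reqs t a'' x'') ->
  (forall t a' x', (a <= a')%N -> exists a'' x'', extd a' x' a'' x'' /\ reqs t a'' x'') ->
  forall a' x', (a <= a')%N -> exists a'' x'', extd a' x' a'' x'' /\ forall t, (t < T)%N -> reqs t a'' x''.
Proof.
move=> hup hach; elim: T => [|T IH] a' x' aa'.
  by exists a', x'; split => //; split.
have [a1 [x1 [[e1 e1'] h1]]] := IH a' x' aa'.
have [a2 [x2 [[e2 e2'] h2]]] := hach T a1 x1 (leq_trans aa' e1).
exists a2, x2; split.
  split; first exact: leq_trans e1 e2.
  move=> i ia; rewrite e2' ?e1' //; exact: leq_trans ia e1.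
move=> t; rewrite ltnS leq_eqVlt => /orP[/eqP->//|tT].
by apply: hup (h1 t tT) _; split.
Qed.

Lemma stage a x n : exists a'' x'', (a < a'')%N /\ (forall i, (i < a)%N -> x'' i = x i) /\
  forall d, (forall i, (a <= i < a'')%N -> d i = x'' i) -> forall k, (k <= n)%N -> ~ F k (rval d).
Proof.
have [a'' [x'' [[e1 e2] hr]]] := @iterate_req a (fun t => Req a (t %/ n.+1) (t %% n.+1))
  (2 ^ a * n.+1) (fun t => @Req_up a _ _) (fun t => @Req_achieve a _ _) a.+1 x (leqnSn a).
exists a'', x''; split; first exact: e1.
split; first by move=> i ia; apply: e2; exact: ltnW.
move=> d hd k kn.
have := hr (Nv d a * n.+1 + k)%N.
rewrite divnMDl // modnMDl divn_small ?modn_small ?ltnS // addn0.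
move=> /(_ _ d erefl hd); apply.
have := leq_mul (Nv_lt d a) (leqnn n.+1); rewrite mulSn; lia.
Qed.

Lemma NF : exists (a : nat -> nat) (x : nat -> bool), a 0%N = 0%N /\ (forall n, (a n < a n.+1)%N) /\
  forall n d, (forall i, (a n <= i < a n.+1)%N -> d i = x i) -> forall k, (k <= n)%N -> ~ F k (rval d).
Proof.
have := fun (s : nat * (nat -> bool) * nat) => stage s.1.1 s.1.2 s.2.
move=> /(_ _) hs.
have {hs} hs' : forall s : nat * (nat -> bool) * nat, exists s' : nat * (nat -> bool),
    (s.1.1 < s'.1)%N /\ (forall i, (i < s.1.1)%N -> s'.2 i = s.1.2 i) /\
    forall d, (forall i, (s.1.1 <= i < s'.1)%N -> d i = s'.2 i) -> forall k, (k <= s.2)%N -> ~ F k (rval d).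
  by move=> s; have [a'' [x'' h]] := hs s; exists (a'', x'').
have [st Hst] := choice hs'.
pose seqs := fix seqs n := if n is n'.+1 then st (seqs n', n') else (0%N, fun _ : nat => false).
pose a n := (seqs n).1; pose xs n := (seqs n).2.
have Hs n : (a n < a n.+1)%N /\ (forall i, (i < a n)%N -> xs n.+1 i = xs n i) /\
    forall d, (forall i, (a n <= i < a n.+1)%N -> d i = xs n.+1 i) -> forall k, (k <= n)%N -> ~ F k (rval d).
  exact: (Hst (seqs n, n)).
have amono : {homo a : m n / (m < n)%N} by apply: homo_ltn ltn_trans _ => n; case: (Hs n).
have age n : (n <= a n)%N.
  elim: n => [|n IH] //; exact: leq_ltn_trans IH (Hs n).1.
have xstab m n : (n <= m)%N -> forall i, (i < a n)%N -> xs m i = xs n i.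
  elim: m => [|m IH]; first by rewrite leqn0 => /eqP->.
  rewrite leq_eqVlt => /orP[/eqP->//|]; rewrite ltnS => nm i ian.
  rewrite (Hs m).2.1; first exact: IH.
  apply: (leq_trans ian); rewrite leq_eqVlt in nm.
  by case/orP: nm => [/eqP->//|/amono/ltnW].
exists a, (fun i => xs i.+1 i); split => //; split; first by move=> n; case: (Hs n).
move=> n d hd k kn; apply: (Hs n).2.2 => // i /andP[i1 i2].
rewrite hd ?i1 ?i2 //.
case: (leqP i n) => hin.
  rewrite (xstab n.+1 i.+1) //; exact: leq_ltn_trans (age i) (Hs i).1.
by rewrite (xstab i.+1 n.+1) // ltnS ltnW.
Qed.

End NF.

End Reals.

Definition tot (h : nat -> set nat) (n : nat) : nat := xget 0%N (h n).

Lemma tot_hit (h : nat -> set nat) n y : ~ ([set: bool] #<= h n) -> h n y -> tot h n = y.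
Proof.
move=> hs hy; have ht : h n (tot h n) by apply: xgetI hy.
apply: contrapT => ne; apply: hs.
apply: (card_le_inj (f := fun b : bool => if b then y else tot h n)).
  by case.
by move=> [] [] _ _ //= E; exfalso; apply: ne.
Qed.

Definition Phi (h h' : nat -> set nat) (i : nat) : bool :=
  odd (tot h (blk (part (tot h')) i) %/ 2 ^ i).

Section Main1b.
Variable R : realType.

Definition yv (h h' : nat -> set nat) : R := rval R (Phi h h').

Lemma main_nonmeager (H : set (nat -> set nat)) : m_family nat bool H ->
  ~ meager [set yv pr.1 pr.2 | pr in H `*` H].
Proof.
move=> [Hs Hc] [F [HF Acov]].
have [a [x [a0 [ainc Hnf]]]] := NF HF.
have amono : {homo a : m n / (m < n)%N} by apply: homo_ltn ltn_trans _.
have age n : (n <= a n)%N.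
  elim: n => [|n IH] //; exact: leq_ltn_trans IH (ainc n).
pose g' m := a m.+2.
have [h' Hh' Hhit'] := Hc setT (card_lexx [set: nat]) g'.
have hit' := card_unbounded Hhit'.
pose t' := tot h'. pose p := part t'.
have p0 : p 0%N = 0%N by [].
have pinc : forall j, (p j < p j.+1)%N by move=> j; apply: part_lt.
pose Kset := [set j | exists n, (p j <= a n)%N /\ (a n.+1 <= p j.+1)%N].
have Kunb : forall N, exists j, (N <= j)%N /\ Kset j.
  move=> N; have [m [Nm [_ hm]]] := hit' (p N).
  have tm : t' m = a m.+2 by apply: tot_hit (Hs _ Hh' m) hm.
  pose j0 := blk p m; have /andP[b1 b2] := blk_spec p0 pinc m.
  have j0N : (N <= j0)%N.
    rewrite leqNgt; apply/negP => /(p_le pinc) hle.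
    by have := leq_trans hle Nm; rewrite leqNgt b2.
  have big : (a m.+2 <= p j0.+2)%N by rewrite -tm; apply: part_big; exact: ltnW.
  case: (leqP (p j0.+1) (a m.+1)) => h.
    by exists j0.+1; split; [exact: leqW | exists m.+1; split].
  exists j0; split => //; exists m; split; [exact: leq_trans b1 (age m) | exact: ltnW].
have HK : [set: nat] #<= Kset := unbounded_card Kunb.
pose g j := bcode x (p j.+1).
have [h Hh Hhit] := Hc Kset HK g.
have hit := card_unbounded Hhit.
have : [set yv pr.1 pr.2 | pr in H `*` H] (yv h h') by exists (h, h').
move=> /Acov [k0 _ Fk0].
have [j [jb [[n [n1 n2]] hj]]] := hit (a k0).
have tj : tot h j = g j by apply: tot_hit (Hs _ Hh j) hj.
apply: (Hnf n (Phi h h') _ k0 _ Fk0).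
  move=> i /andP[i1 i2].
  have bi : blk p i = j.
    apply: blk_uniq => //; apply/andP; split; first exact: leq_trans n1 i1.
    exact: leq_trans i2 n2.
  rewrite /Phi -/t' -/p bi tj /g bcode_bit //; exact: leq_trans i2 n2.
rewrite leqNgt; apply/negP => /amono hlt.
have := leq_trans (leq_trans jb (p_ge pinc j)) n1.
by rewrite leqNgt hlt.
Qed.

End Main1b.

Lemma m_family_infinite (H : set (nat -> set nat)) : m_family nat bool H -> infinite_set H.
Proof.
move=> [Hs Hc] fin.
have cH : H #<= [set: nat] := finite_set_countable fin.
have [io [_ ioI]] := card_le_get cH 0%N.
have : forall i, exists h : nat -> set nat, (exists h0, H h0 /\ io h0 = i) -> H h /\ io h = i.
  move=> i; case: (pselect (exists h0, H h0 /\ io h0 = i)) => [[h0 hh]|n].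
    by exists h0.
  by exists (fun _ => set0).
move=> /choice[e He].
pose g m := (\max_(i < m.+1) tot (e i) m).+1.
have [h Hh Hhit] := Hc setT (card_lexx [set: nat]) g.
have [m [mb [_ hm]]] := card_unbounded Hhit (io h).
have E : e (io h) = h.
  have [He1 He2] := He (io h) (ex_intro _ h (conj Hh erefl)).
  by apply: ioI.
have T1 := tot_hit (Hs h Hh m) hm.
have : (tot h m <= \max_(i < m.+1) tot (e i) m)%N.
  have mb' : (io h < m.+1)%N by rewrite ltnS.
  rewrite -[in X in (X <= _)%N]E.
  exact: (@leq_bigmax_cond _ (fun _ => true) (fun i : 'I_m.+1 => tot (e i) m) (Ordinal mb')).
by rewrite T1 /g ltnn.
Qed.

Lemma not_all_ex (T : Type) (P Q : T -> Prop) :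
  ~ (forall a, P a -> Q a) -> exists a, P a /\ ~ Q a.
Proof.
move=> h; apply: contrapT => nh; apply: h => a Pa; apply: contrapT => nQ.
by apply: nh; exists a.
Qed.

Lemma card_le_total (T : Type) (A B : set T) : A #<= B \/ B #<= A.
Proof.
pose P := [set G : set (T * T) | G `<=` A `*` B /\
  (forall a b b', G (a, b) -> G (a, b') -> b = b') /\
  (forall a a' b, G (a, b) -> G (a', b) -> a = a')].
have [G0 [[G0AB [G0f G0i]] G0max]] : exists G0, P G0 /\ forall G, G0 `<` G -> ~ P G.
  apply: Zorn_bigcup => F FP Ftot; split; [|split].
  - by move=> [a b] [G FG Gab]; apply: (FP G FG).1.
  - move=> a b b' [G1 F1 h1] [G2 F2 h2].
    have [s12|s21] := Ftot _ _ F1 F2.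
      by apply: (FP G2 F2).2.1 _ _ _ (s12 _ h1) h2.
    by apply: (FP G1 F1).2.1 _ _ _ h1 (s21 _ h2).
  - move=> a a' b [G1 F1 h1] [G2 F2 h2].
    have [s12|s21] := Ftot _ _ F1 F2.
      by apply: (FP G2 F2).2.2 _ _ _ (s12 _ h1) h2.
    by apply: (FP G1 F1).2.2 _ _ _ h1 (s21 _ h2).
have [allA|/not_all_ex[a [Aa na]]] := pselect (forall a, A a -> exists b, G0 (a, b)); last first.
  have [allB|/not_all_ex[b [Bb nb]]] := pselect (forall b, B b -> exists a, G0 (a, b)); last first.
    exfalso; apply: (G0max (G0 `|` [set (a, b)])).
      split; first by move=> t; left.
      by move=> sub; apply: na; exists b; apply: sub; right.
    split; [|split].
    - by move=> t [/G0AB//|->].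
    - move=> a1 b1 b1' [h1|[= e1 e2]] [h2|[= e1' e2']].
      + exact: G0f h1 h2.
      + by exfalso; apply: na; exists b1; rewrite -e1'.
      + by exfalso; apply: na; exists b1'; rewrite -e1.
      + by rewrite e2 e2'.
    - move=> a1 a1' b1 [h1|[= e1 e2]] [h2|[= e1' e2']].
      + exact: G0i h1 h2.
      + by exfalso; apply: nb; exists a1; rewrite -e2'.
      + by exfalso; apply: nb; exists a1'; rewrite -e2.
      + by rewrite e1 e1'.
  right.
  have : forall b, exists a, B b -> G0 (a, b).
    move=> b; have [Bb|nBb] := pselect (B b); last by exists b.
    by have [a' h] := allB b Bb; exists a'.
  move=> /choice[f hf]; apply: (card_le_inj (f := f)).
    by move=> b Bb; have := G0AB _ (hf b Bb); case.
  by move=> b b' /set_mem Bb /set_mem Bb' E; apply: (G0f (f b)); [apply: hf|rewrite E; apply: hf].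
left.
have : forall a, exists b, A a -> G0 (a, b).
  move=> a; have [Aa|nAa] := pselect (A a); last by exists a.
  by have [b' h] := allA a Aa; exists b'.
move=> /choice[f hf]; apply: (card_le_inj (f := f)).
  by move=> a Aa; have := G0AB _ (hf a Aa); case.
by move=> a a' /set_mem Aa /set_mem Aa' E; apply: (G0i _ _ (f a)); [apply: hf|rewrite E; apply: hf].
Qed.

Lemma ifPT (P : Prop) (A : Type) (a b : A) : P -> (if `[< P >] then a else b) = a.
Proof. by move=> p; rewrite asboolT. Qed.
Lemma ifPF (P : Prop) (A : Type) (a b : A) : ~ P -> (if `[< P >] then a else b) = b.
Proof. by move=> p; rewrite asboolF. Qed.

Lemma hessenberg (T : Type) (H : set T) : infinite_set H -> H `*` H #<= H.
Proof.
move=> Hinf.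
have [t0 _] := infinite_setN0 Hinf.
have [io [ioH ioI]] := card_le_get ((infiniteP _).1 Hinf) t0.
have ioS k : H (io k) by apply: ioH.
have ioinj m n : io m = io n -> m = n by apply: ioI.
pose pk (mn : nat * nat) := pickle mn.
have pkI : injective pk by apply: (pcan_inj pickleK).
pose SG (G : set ((T * T) * T)) := [set u | exists w, G ((u, u), w)].
pose P (G : set ((T * T) * T)) := [/\ SG G `<=` H,
  (forall u v w, G ((u, v), w) -> [/\ SG G u, SG G v & SG G w]),
  (forall u v, SG G u -> SG G v -> exists w, G ((u, v), w)),
  (forall q w w', G (q, w) -> G (q, w') -> w = w') &
  (forall q q' w, G (q, w) -> G (q', w) -> q = q')].
pose Gb := [set t | exists m n, t = ((io m, io n), io (pk (m, n)))].
pose P2 G := P G /\ (G = set0 \/ Gb `<=` G).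
have SGmono G1 G2 : G1 `<=` G2 -> SG G1 `<=` SG G2.
  by move=> s u [w h]; exists w; apply: s.
have SGb k : SG Gb (io k) by exists (io (pk (k, k))), k, k.
have PGb : P2 Gb.
  split; last by right.
  split.
  - by move=> u [w [m [n [-> _ _]]]].
  - by move=> u v w [m [n [-> -> ->]]]; split.
  - move=> u v [w1 [m [n [-> _ _]]]] [w2 [m' [n' [-> _ _]]]].
    by exists (io (pk (m, m'))), m, m'.
  - move=> q w w' [m [n [-> ->]]] [m' [n' [/ioinj <- /ioinj <- ->]]].
    by [].
  - move=> q q' w [m [n [-> ->]]] [m' [n' [-> /ioinj /pkI [<- <-]]]].
    by [].
have [G0 [[[P0a P0b P0c P0d P0e] base0] max0]] : exists G0, P2 G0 /\ forall G, G0 `<` G -> ~ P2 G.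
  apply: Zorn_bigcup => F FP Ftot.
  have FPG G : F G -> P G by move=> /FP[].
  have subU G : F G -> G `<=` \bigcup_(X in F) X by move=> FG t h; exists G.
  have SGU u : SG (\bigcup_(X in F) X) u -> exists2 G, F G & SG G u.
    by move=> [w [G FG h]]; exists G => //; exists w.
  split; first split.
  - move=> u /SGU[G FG h]; by have [] := FPG G FG; move=> /(_ u h).
  - move=> u v w [G FG h]; have [_ hb _ _ _] := FPG G FG.
    have [hu hv hw] := hb u v w h.
    by split; apply: (SGmono _ _ (subU G FG)).
  - move=> u v /SGU[G1 F1 h1] /SGU[G2 F2 h2].
    have [s12|s21] := Ftot _ _ F1 F2.
      have [_ _ hc _ _] := FPG G2 F2.
      have [w hw] := hc u v (SGmono _ _ s12 _ h1) h2.
      by exists w; exists G2.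
    have [_ _ hc _ _] := FPG G1 F1.
    have [w hw] := hc u v h1 (SGmono _ _ s21 _ h2).
    by exists w; exists G1.
  - move=> q w w' [G1 F1 h1] [G2 F2 h2].
    have [s12|s21] := Ftot _ _ F1 F2.
      by have [_ _ _ hd _] := FPG G2 F2; apply: hd (s12 _ h1) h2.
    by have [_ _ _ hd _] := FPG G1 F1; apply: hd h1 (s21 _ h2).
  - move=> q q' w [G1 F1 h1] [G2 F2 h2].
    have [s12|s21] := Ftot _ _ F1 F2.
      by have [_ _ _ _ he] := FPG G2 F2; apply: he (s12 _ h1) h2.
    by have [_ _ _ _ he] := FPG G1 F1; apply: he h1 (s21 _ h2).
  have [[G [FG bG]]|nb] := pselect (exists G, F G /\ Gb `<=` G).
    by right; apply: subset_trans bG (subU G FG).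
  left; apply/seteqP; split => // t [G FG h].
  have [_ [G0|bG]] := FP G FG; first by rewrite G0 in h.
  by exfalso; apply: nb; exists G.
have {base0} base0 : Gb `<=` G0.
  case: base0 => // G00; exfalso; apply: (max0 Gb) => //.
  rewrite G00; split => // sub.
  by have := sub ((io 0, io 0), io (pk (0, 0)))%N; apply; exists 0%N, 0%N.
pose S := SG G0.
have ioS0 k : S (io k) by apply: (SGmono _ _ base0); apply: SGb.
have : forall q : T * T, exists w, S q.1 -> S q.2 -> G0 (q, w).
  move=> [u v]; have [Su|nSu] := pselect (S u); last by exists u.
  have [Sv|nSv] := pselect (S v); last by exists u.
  by have [w hw] := P0c u v Su Sv; exists w.
move=> /choice[f0 Hf0'].
have Hf0 u v : S u -> S v -> G0 ((u, v), f0 (u, v)) by move=> *; apply: Hf0'.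
have f0S u v : S u -> S v -> S (f0 (u, v)).
  by move=> Su Sv; have [] := P0b _ _ _ (Hf0 u v Su Sv).
have f0inj u v u' v' : S u -> S v -> S u' -> S v' -> f0 (u, v) = f0 (u', v') -> u = u' /\ v = v'.
  move=> Su Sv Su' Sv' E.
  have := P0e _ _ _ (Hf0 u v Su Sv); rewrite E => /(_ _ (Hf0 u' v' Su' Sv')).
  by case.
have HS : H #<= S.
  case: (card_le_total (H `\` S) S) => hle.
    have [phi [phiS phiI]] := card_le_get hle t0.
    pose psi u := if `[< S u >] then f0 (u, io 0%N) else f0 (phi u, io 1%N).
    apply: (card_le_inj (f := psi)).
      move=> u Hu; rewrite /psi; have [Su|nSu] := pselect (S u).
        by rewrite ifPT //; apply: f0S.
      by rewrite ifPF //; apply: f0S => //; apply: phiS.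
    move=> u u' /set_mem Hu /set_mem Hu'; rewrite /psi.
    have [Su|nSu] := pselect (S u); have [Su'|nSu'] := pselect (S u').
    - by rewrite !ifPT // => /f0inj [] // -> _.
    - rewrite ifPT // ifPF // => /f0inj [] //; first exact: phiS.
      by move=> _ /ioinj.
    - rewrite ifPF // ifPT // => /f0inj [] //; first exact: phiS.
      by move=> _ /ioinj.
    - rewrite !ifPF // => /f0inj [] //; try exact: phiS.
      by move=> E _; apply: (phiI u u') => //; split.
  exfalso.
  have [phi [phiS phiI]] := card_le_get hle t0.
  pose Tp := phi @` S.
  have TpnS u : Tp u -> ~ S u by move=> [s Ss <-]; case: (phiS s Ss).
  have TpH u : Tp u -> H u by move=> [s Ss <-]; case: (phiS s Ss).
  have : forall u, exists s, Tp u -> S s /\ phi s = u.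
    move=> u; have [[s Ss E]|nT] := pselect (Tp u); last by exists u.
    by exists s.
  move=> /choice[sig' Hsig'].
  pose sig u := if `[< S u >] then u else sig' u.
  have sigS u : S u \/ Tp u -> S (sig u).
    rewrite /sig; have [Su|nSu] := pselect (S u); first by rewrite ifPT.
    by rewrite ifPF // => [[//|/Hsig'[]]].
  have sig_rec u u' : S u \/ Tp u -> S u' \/ Tp u' -> (S u <-> S u') -> sig u = sig u' -> u = u'.
    rewrite /sig => hu hu' eqS; have [Su|nSu] := pselect (S u).
      by have Su' := eqS.1 Su; rewrite !ifPT.
    have nSu' : ~ S u' by move=> /eqS.2.
    rewrite !ifPF // => E.
    case: hu => // /Hsig'[_ <-]; case: hu' => // /Hsig'[_ <-].
    by rewrite E.
  pose c u v := if `[< S u >] then io 0%N else if `[< S v >] then io 1%N else io 2%N.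
  have cE1 u v : S u -> c u v = io 0%N by move=> h; rewrite /c ifPT.
  have cE2 u v : ~ S u -> S v -> c u v = io 1%N by move=> h h'; rewrite /c ifPF // ifPT.
  have cE3 u v : ~ S u -> ~ S v -> c u v = io 2%N by move=> h h'; rewrite /c ifPF // ifPF.
  have cS u v : S (c u v).
    have [Su|nSu] := pselect (S u); first by rewrite cE1.
    by have [Sv|nSv] := pselect (S v); [rewrite cE2|rewrite cE3].
  have c_eq u v u' v' : c u v = c u' v' -> (S u <-> S u') /\ (S v \/ S u <-> S v' \/ S u').
    move=> E.
    have [Su|nSu] := pselect (S u); have [Su'|nSu'] := pselect (S u').
    - by split; [split | split => _; right].
    - exfalso; rewrite (cE1 _ _ Su) in E.
      have [Sv'|nSv'] := pselect (S v');
        [rewrite (cE2 _ _ nSu' Sv') in E | rewrite (cE3 _ _ nSu' nSv') in E];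
        by have := ioinj _ _ E.
    - exfalso; rewrite (cE1 _ _ Su') in E.
      have [Sv|nSv] := pselect (S v);
        [rewrite (cE2 _ _ nSu Sv) in E | rewrite (cE3 _ _ nSu nSv) in E];
        by have := ioinj _ _ E.
    have [Sv|nSv] := pselect (S v); have [Sv'|nSv'] := pselect (S v').
    + by split; [split | split => _; left].
    + by rewrite (cE2 _ _ nSu Sv) (cE3 _ _ nSu' nSv') in E; have := ioinj _ _ E.
    + by rewrite (cE3 _ _ nSu nSv) (cE2 _ _ nSu' Sv') in E; have := ioinj _ _ E.
    + by split; [split | split => -[]].
  pose vl u v := phi (f0 (f0 (sig u, sig v), c u v)).
  have inner u v : S u \/ Tp u -> S v \/ Tp v -> S (f0 (f0 (sig u, sig v), c u v)).
    move=> hu hv; apply: (f0S); last exact: cS.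
    by apply: (f0S); apply: sigS.
  have vlTp u v : S u \/ Tp u -> S v \/ Tp v -> Tp (vl u v).
    by move=> hu hv; exists (f0 (f0 (sig u, sig v), c u v)) => //; apply: inner.
  pose New := [set t | exists u v, t = ((u, v), vl u v) /\
    (S u \/ Tp u) /\ (S v \/ Tp v) /\ ~ (S u /\ S v)].
  pose G1 := G0 `|` New.
  have SG1sub u : SG G1 u -> S u \/ Tp u.
    move=> [w [h|[u' [v' [[-> _ _] [hu _]]]]]]; last by [].
    by left; exists w.
  have SG1sup u : S u \/ Tp u -> SG G1 u.
    case=> [Su|Tu]; first by apply: (SGmono G0 G1) => //; move=> t h; left.
    exists (vl u u); right; exists u, u; split => //; split; [by right|split; [by right|]].
    by move=> [/TpnS].
  apply: (max0 G1); split.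
  - by move=> t h; left.
  - move=> sub.
    have Tu : Tp (phi (io 0%N)) by exists (io 0%N).
    have := sub ((phi (io 0%N), phi (io 0%N)), vl (phi (io 0%N)) (phi (io 0%N))).
    have h0 : G1 ((phi (io 0%N), phi (io 0%N)), vl (phi (io 0%N)) (phi (io 0%N))).
      right; exists (phi (io 0%N)), (phi (io 0%N)); split => //; split; [by right|split; [by right|]].
      by move=> [/TpnS].
    by move=> /(_ h0) /P0b [/(TpnS _ Tu)].
  - split.
    + move=> u /SG1sub [/P0a//|/TpH//].
    + move=> u v w [h|[u' [v' [[-> -> ->] [hu [hv _]]]]]].
        have [hu hv hw] := P0b _ _ _ h.
        by split; apply: (SGmono G0 G1) => // t ht; left.
      by split; apply: SG1sup => //; right; apply: vlTp.
    + move=> u v /SG1sub hu /SG1sub hv.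
      have [[Su Sv]|nSS] := pselect (S u /\ S v).
        by exists (f0 (u, v)); left; apply: Hf0.
      by exists (vl u v); right; exists u, v.
    + move=> q w w' [h|[u [v [[E1 E2] [hu [hv nS]]]]]] [h'|[u' [v' [[E1' E2'] [hu' [hv' nS']]]]]].
      * exact: P0d h h'.
      * rewrite E1' in h; have [Su Sv _] := P0b _ _ _ h.
        by exfalso; apply: nS'.
      * rewrite E1 in h'; have [Su Sv _] := P0b _ _ _ h'.
        by exfalso; apply: nS.
      * by rewrite E2 E2'; rewrite E1 in E1'; case: E1' => -> ->.
    + move=> q q' w [h|[u [v [[E1 E2] [hu [hv nS]]]]]] [h'|[u' [v' [[E1' E2'] [hu' [hv' nS']]]]]].
      * exact: P0e h h'.
      * case: q h => qa qb h; have [_ _ Sw] := P0b _ _ _ h; rewrite E2' in Sw.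
        by exfalso; apply: (TpnS _ (vlTp _ _ hu' hv')).
      * case: q' h' => qa qb h'; have [_ _ Sw] := P0b _ _ _ h'; rewrite E2 in Sw.
        by exfalso; apply: (TpnS _ (vlTp _ _ hu hv)).
      * subst q q'; move: E2'; rewrite E2 => /phiI E.
        have := E (inner _ _ hu hv) (inner _ _ hu' hv').
        move=> /f0inj [] //; try (by apply: cS); try (by apply: f0S; apply: sigS).
        move=> /f0inj [] //; try (by apply: sigS).
        move=> esu esv /c_eq [eu ev].
        have eu' := sig_rec _ _ hu hu' eu esu.
        have ev' : S v <-> S v'.
          split => h.
            have : S v' \/ S u' by apply: ev.1; left.
            case => // Su'; exfalso; apply: nS'; split => //.
            by exfalso; apply: nS; split => //; apply: eu.2.
          have : S v \/ S u by apply: ev.2; left.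
          case => // Su; exfalso; apply: nS; split => //.
          by exfalso; apply: nS'; split => //; apply: eu.1.
        by rewrite eu' (sig_rec _ _ hv hv' ev' esv).
  - by right; apply: subset_trans base0 _ => t h; left.
have [rho [rhoS rhoI]] := card_le_get HS t0.
apply: (card_le_inj (f := fun q => f0 (rho q.1, rho q.2))).
  by move=> [u v] [/= Hu Hv]; apply: P0a; apply: f0S; apply: rhoS.
move=> [u v] [u' v'] /set_mem [/= Hu Hv] /set_mem [/= Hu' Hv'] /=.
move=> /f0inj [] //; try (by apply: rhoS).
by move=> /rhoI -> // /rhoI -> //.
Qed.

Theorem proposition2p3 :
  (* m(aleph0, aleph0, aleph0) = m(aleph0,aleph0,aleph0,2) = non(M) *)
  (forall R : realType,
     (forall A : set R, ~ meager A ->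
        exists2 H : set (nat -> set nat), m_family nat bool H & H #<= A) /\
     (forall H : set (nat -> set nat), m_family nat bool H ->
        exists2 A : set R, ~ meager A & A #<= H)) /\
  (* m(theta, theta, theta, theta) = b_theta for infinite regular theta *)
  (forall (T : Type) (lt : T -> T -> Prop), infinite_regular_cardinal lt ->
     (forall B : set (T -> T), star_unbounded lt B ->
        exists2 H : set (T -> set T), m_family T T H & H #<= B) /\
     (forall H : set (T -> set T), m_family T T H ->
        exists2 B : set (T -> T), star_unbounded lt B & B #<= H)).
Proof.
split.
  move=> R; split; first exact: part1a.
  move=> H Hm; exists [set yv R pr.1 pr.2 | pr in H `*` H]; first exact: main_nonmeager.
  apply: card_le_trans (card_image_le _ _) _.
  exact: hessenberg (m_family_infinite Hm).
move=> T lt Hreg; split; [exact: theta_part1|exact: theta_part2].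
Qed.
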